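(* Assume $p=0$ (no equality constraints). Let $\mathbf x\in\Omega$ satisfy the SCQ and let $\mathbf d\in\mathcal T^H_\Omega(\mathbf x)$. Then there exists $\epsilon>0$ such that for all $\mathbf y\in\mathcal B(\mathbf x,\epsilon)$, all $\mathbf w\in\mathcal B(\mathbf d,\epsilon)$ and all $t\in(0,\epsilon)$, $$c^{int}(\mathbf y+t\mathbf w)\le c^{int}(\mathbf y)\quad\text{and}\quad c^{ext}(\mathbf y+t\mathbf w)\le c^{ext}(\mathbf y).$$
   Context: Consider the problem of minimizing $f(\mathbf x)$ over $\mathbf x\in\mathbb R^n$ subject to $g_\ell(\mathbf x)\le 0$ ($\ell=1,\dots,m$), with $f,g_\ell:\mathbb R^n\to\mathbb R\cup\{+\infty\}$ (no equality constraints). The index set $\{1,\dots,m\}$ is partitioned into disjoint sets $\mathcal G^{int}$ and $\mathcal G^{ext}$. Define $\Omega^{int}=\{\mathbf x: g_\ell(\mathbf x)\le 0\ \forall\ell\in\mathcal G^{int}\}$, $\Omega^{ext}=\{\mathbf x: g_\ell(\mathbf x)\le0\ \forall \ell\in\mathcal G^{ext}\}$, $\Omega=\Omega^{int}\cap\Omega^{ext}$. Let $\phi^{prox}(\mathbf x)=\max_{\ell\in\mathcal G^{int}}g_\ell(\mathbf x)$; $c^{int}(\mathbf x)=-\prod_{\ell\in\mathcal G^{int}}\min\{1,-g_\ell(\mathbf x)\}$ if $g_\ell(\mathbf x)\le0$ for all $\ell\in\mathcal G^{int}$, and $c^{int}(\mathbf x)=\phi^{prox}(\mathbf x)$ otherwise;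 $c^{ext}(\mathbf x)=\sum_{\ell\in\mathcal G^{ext}}(\max\{0,g_\ell(\mathbf x)\})^2$. $\mathcal B(\mathbf x,\epsilon)$ denotes the ball of radius $\epsilon$ centred at $\mathbf x$. Clarke generalized directional derivative: $c^\circ(\mathbf x;\mathbf d)=\limsup_{\mathbf y\to\mathbf x,\ t\searrow0}\frac{c(\mathbf y+t\mathbf d)-c(\mathbf y)}{t}$. Hypertangent cone: $\mathbf d$ is hypertangent to $\Omega$ at $\mathbf x$ if there is $\epsilon>0$ with $\mathbf y+t\mathbf w\in\Omega$ for all $\mathbf y\in\Omega\cap\mathcal B(\mathbf x,\epsilon)$, $\mathbf w\in\mathcal B(\mathbf d,\epsilon)$, $t\in(0,\epsilon)$; $\mathcal T^H_\Omega(\mathbf x)$ is the set of such vectors. Stationarity constraint qualification (SCQ): a point $\mathbf x\in\Omega$ satisfies SCQ if (a) $c^{int}$ and $c^{ext}$ are Lipschitz continuous near $\mathbf x$; (b) $(c^{int})^\circ(\mathbf x;\mathbf d)<0$ for every $\mathbf d\in\mathcal T^H_\Omega(\mathbf x)$; (c) for every $\mathbf d\in\mathcal T^H_\Omega(\mathbf x)$ there is $\epsilon>0$ such that $(c^{ext})^\circ(\mathbf y;\mathbf d)<0$ for all $\mathbf y\in\mathcal B(\mathbf x,\epsilon)\setminus\Omega^{ext}$. *)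

(* Defs.v *)
From HB Require Import structures.
From mathcomp Require Import all_boot all_order all_algebra.
From mathcomp Require Import all_classical all_reals ereal.
Set Implicit Arguments. Unset Strict Implicit. Unset Printing Implicit Defensive.
Import Order.TTheory GRing.Theory Num.Theory.
Local Open Scope classical_set_scope.
Local Open Scope ring_scope.

Section Defs.
Variables (R : realType) (n m : nat).
Notation vec := 'rV[R]_n.

Definition enorm (v : vec) : R := Num.sqrt (\sum_(i < n) (v ord0 i) ^+ 2).
Definition eball (c : vec) (e : R) (y : vec) : Prop := enorm (y - c) < e.

Variables (g : 'I_m -> vec -> \bar R) (Gint : {set 'I_m}).
Definition Gext : {set 'I_m} := ~: Gint.

Definition Omega_int (x : vec) : Prop := forall l, l \in Gint -> (g l x <= 0)%E.
Definition Omega_ext (x : vec) : Prop := forall l, l \in Gext -> (g l x <= 0)%E.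
Definition Omega (x : vec) : Prop := Omega_int x /\ Omega_ext x.

Definition phi_prox (x : vec) : \bar R := \big[maxe/-oo%E]_(l in Gint) g l x.

Definition c_int (x : vec) : \bar R :=
  if `[< Omega_int x >] then
    (- \big[mule/1%E]_(l in Gint) mine 1%E (- g l x))%E
  else phi_prox x.

Definition c_ext (x : vec) : \bar R :=
  (\sum_(l in Gext) (maxe 0%E (g l x) * maxe 0%E (g l x)))%E.

Definition clarke (c : vec -> \bar R) (x d : vec) : \bar R :=
  ereal_inf [set ereal_sup [set q | exists y t, eball x e y /\ 0 < t < e /\
                               q = ((c (y + t *: d)%R - c y) * (t^-1)%:E)%E]
            | e in [set e : R | 0 < e]].

Definition lipschitz_near (c : vec -> \bar R) (x : vec) : Prop :=
  exists e L : R, 0 < e /\ forall y z, eball x e y -> eball x e z ->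
    c y \is a fin_num /\ c z \is a fin_num /\
    `|fine (c y) - fine (c z)| <= L * enorm (y - z).

Definition hypertangent (x d : vec) : Prop :=
  exists e : R, 0 < e /\ forall y w t, Omega y -> eball x e y -> eball d e w ->
    0 < t < e -> Omega (y + t *: w).

Definition SCQ (x : vec) : Prop :=
  Omega x /\
  (lipschitz_near c_int x /\ lipschitz_near c_ext x) /\
  (forall d, hypertangent x d -> (clarke c_int x d < 0)%E) /\
  (forall d, hypertangent x d -> exists e : R, 0 < e /\
     forall y, eball x e y -> ~ Omega_ext y -> (clarke c_ext y d < 0)%E).
End Defs.

(* Main.v *)
Require Import Defs.
From HB Require Import structures.
From mathcomp Require Import all_boot all_order all_algebra.
From mathcomp Require Import all_classical all_reals ereal.
From mathcomp Require Import lra ring.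
Import Order.TTheory GRing.Theory Num.Theory.
Local Open Scope classical_set_scope.
Local Open Scope ring_scope.
Set Implicit Arguments. Unset Strict Implicit. Unset Printing Implicit Defensive.


Section Norms.
Variables (R : realType) (n : nat).
Notation vec := 'rV[R]_n.

Definition N1 (v : vec) : R := \sum_(i < n) `|v 0 i|.

Lemma N1_ge0 (v : vec) : 0 <= N1 v.
Proof. by apply: sumr_ge0 => i _. Qed.

Lemma enorm_ge0 (v : vec) : 0 <= enorm v.
Proof. exact: sqrtr_ge0. Qed.

Lemma N1D (a b : vec) : N1 (a + b) <= N1 a + N1 b.
Proof.
rewrite /N1 -big_split /=; apply: ler_sum => i _; rewrite mxE; exact: ler_normD.
Qed.

Lemma N1Z (c : R) (a : vec) : N1 (c *: a) = `|c| * N1 a.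
Proof.
rewrite /N1 mulr_sumr; apply: eq_bigr => i _; by rewrite mxE normrM.
Qed.

Lemma N1N (a : vec) : N1 (- a) = N1 a.
Proof. by rewrite /N1; apply: eq_bigr => i _; rewrite mxE normrN. Qed.

Lemma N1B (a b : vec) : N1 (a - b) = N1 (b - a).
Proof. by rewrite -N1N opprB. Qed.

Lemma enorm_le_N1 (v : vec) : enorm v <= N1 v.
Proof.
rewrite /enorm /N1.
have [H1 H2] : \sum_(i < n) v 0 i ^+ 2 <= (\sum_(i < n) `|v 0 i|) ^+ 2 /\
               0 <= \sum_(i < n) `|v 0 i|.
  elim/big_rec2: _ => [|i y1 y2 _ [Hy Hy2]]; first by rewrite expr0n /=.
  split; last by rewrite addr_ge0.
  rewrite sqrrD -real_normK ?num_real //.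
  rewrite -addrA lerD2l; apply: (le_trans Hy).
  rewrite lerDr; apply: mulrn_wge0; exact: mulr_ge0.
rewrite -(ger0_norm H2) -sqrtr_sqr ler_sqrt //; exact: sqr_ge0.
Qed.

Lemma coord_le_enorm (v : vec) i : `|v 0 i| <= enorm v.
Proof.
rewrite /enorm -sqrtr_sqr ler_sqrt; last by apply: sumr_ge0 => j _; exact: sqr_ge0.
rewrite (bigD1 i) //= lerDl; apply: sumr_ge0 => j _; exact: sqr_ge0.
Qed.

Lemma N1_le_enorm (v : vec) : N1 v <= n%:R * enorm v.
Proof.
rewrite /N1; apply: (le_trans (ler_sum _ (fun i _ => coord_le_enorm v i))).
by rewrite sumr_const card_ord mulr_natl.
Qed.

Lemma N1_delta (i : 'I_n) : N1 (delta_mx 0 i) = 1.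
Proof.
rewrite /N1 (bigD1 i) //= big1 ?addr0; first by rewrite mxE !eqxx normr1.
by move=> j /negbTE Hj; rewrite mxE Hj andbF normr0.
Qed.

Lemma enorm_tri (a b : vec) : enorm (a + b) <= n%:R * (enorm a + enorm b).
Proof.
apply: (le_trans (enorm_le_N1 _)); apply: (le_trans (N1D _ _)).
rewrite mulrDr; apply: lerD; exact: N1_le_enorm.
Qed.
End Norms.


Lemma ereal_quot_le (R : realType) (a b : \bar R) (t : R) :
  0 < t -> ((a - b) * (t^-1)%:E < 0)%E -> (a <= b)%E.
Proof.
move=> t0; case: a => [a| |]; case: b => [b| |] //=; rewrite ?leey ?leNye //.
- rewrite -EFinM lte_fin lee_fin pmulr_llt0 ?invr_gt0 // subr_lt0; exact: ltW.
- by rewrite gt0_mulye ?lte_fin ?invr_gt0.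
- by rewrite gt0_mulye ?lte_fin ?invr_gt0.
- by rewrite gt0_mulye ?lte_fin ?invr_gt0.
Qed.

Lemma fin_min (I : finType) (R : realType) (P : I -> R -> Prop) :
  (forall i a b, 0 < a -> a <= b -> P i b -> P i a) ->
  (forall i, exists e, 0 < e /\ P i e) ->
  exists e, 0 < e /\ forall i, P i e.
Proof.
move=> mono H.
suff [e [e0 He]] : exists e, 0 < e /\ forall i, i \in enum I -> P i e.
  by exists e; split => // i; apply: He; rewrite mem_enum.
elim: (enum I) => [|j s [e [e0 He]]]; first by exists 1; split.
have [f [f0 Hf]] := H j.
exists (Order.min e f); split; first by rewrite lt_min e0 f0.
move=> i; rewrite inE => /orP [/eqP -> | Hi].
  by apply: (mono _ _ f) => //; [rewrite lt_min e0 f0 | rewrite ge_min lexx orbT].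
by apply: (mono _ _ e) => //; [rewrite lt_min e0 f0 | rewrite ge_min lexx | exact: He].
Qed.

Section Dec.
Variables (R : realType) (n : nat) (c : 'rV[R]_n -> \bar R).
Notation vec := 'rV[R]_n.

Definition Dec (z v : vec) (d : R) := forall u tau, enorm (u - z) < d ->
  0 <= tau -> tau < d -> (c (u + tau *: v) <= c u)%E.

Lemma Dec_mono (z v : vec) (d d' : R) : d' <= d -> Dec z v d -> Dec z v d'.
Proof.
move=> le H u tau Hu Ht0 Ht; apply: H => //; exact: lt_le_trans le.
Qed.

Lemma Dec0 (z : vec) (d : R) : Dec z 0 d.
Proof. by move=> u tau _ _ _; rewrite scaler0 addr0. Qed.

Lemma DecZ (z v : vec) (d a : R) : 0 <= a <= 1 -> Dec z v d -> Dec z (a *: v) d.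
Proof.
move=> /andP [a0 a1] H u tau Hu Ht0 Ht; rewrite scalerA; apply: H => //.
  exact: mulr_ge0.
by apply: le_lt_trans Ht; rewrite ler_piMr.
Qed.

Lemma DecD (z a b : vec) (da db M : R) : 0 < da -> da <= db -> 0 <= M -> N1 a <= M ->
  Dec z a da -> Dec z b db -> Dec z (a + b) (da / (n%:R + M + 1)).
Proof.
move=> da0 dab M0 Na Ha Hb.
have q1 : 1 <= n%:R + M + 1 by rewrite lerDr addr_ge0.
have q0 : 0 < n%:R + M + 1 by apply: lt_le_trans q1.
have dle : da / (n%:R + M + 1) <= da by rewrite ler_pdivrMr // ler_peMr // ltW.
have d'0 : 0 < da / (n%:R + M + 1) by rewrite divr_gt0.
move=> u tau Hu Ht0 Ht.
rewrite scalerDr addrA.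
have tda : tau < da by apply: (lt_le_trans Ht).
have Hua : enorm (u - z) < da by apply: (lt_le_trans Hu).
apply: (le_trans _ (Ha _ _ Hua Ht0 tda)).
apply: Hb => //; last by apply: (lt_le_trans tda).
apply: (le_lt_trans (enorm_le_N1 _)).
rewrite addrAC; apply: (le_lt_trans (N1D _ _)); rewrite N1Z ger0_norm //.
apply: (lt_le_trans (y := (n%:R + M + 1) * (da / (n%:R + M + 1)))); last first.
  by rewrite mulrC divfK ?gt_eqF // lexx.
rewrite mulrDl mul1r; apply: (le_lt_trans (y := (n%:R + M) * (da / (n%:R + M + 1)))); last first.
  by rewrite ltrDl.
rewrite mulrDl; apply: lerD.
  by apply: (le_trans (N1_le_enorm _)); rewrite ler_wpM2l // ltW.
rewrite mulrC; apply: (le_trans (y := M * tau)); first by rewrite ler_wpM2r.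
by rewrite ler_wpM2l // ltW.
Qed.

Lemma N1_sum (I : Type) (s : seq I) (F : I -> vec) (B : R) :
  (forall i, N1 (F i) <= B) -> N1 (\sum_(i <- s) F i) <= (size s)%:R * B.
Proof.
move=> HB; elim: s => [|x s IH]; first by rewrite big_nil /N1 big1 ?mul0r // => i _; rewrite mxE normr0.
rewrite big_cons; apply: (le_trans (N1D _ _)).
by rewrite /= -natr1 mulrDl mul1r addrC lerD.
Qed.

Lemma Dec_sum (z : vec) (I : Type) (s : seq I) (F : I -> vec) (B d : R) (K : nat) :
  0 < d -> 0 <= B -> (size s <= K)%N ->
  (forall i, N1 (F i) <= B) -> (forall i, Dec z (F i) d) ->
  Dec z (\sum_(i <- s) F i) (d / (n%:R + K%:R * B + 1) ^+ size s).
Proof.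
move=> d0 B0 sK HB HD.
have q1 : 1 <= n%:R + K%:R * B + 1 by rewrite lerDr addr_ge0 // mulr_ge0.
have q0 : 0 < n%:R + K%:R * B + 1 by apply: lt_le_trans q1.
elim: s sK => [|x s IH] sK; first by rewrite big_nil; exact: Dec0.
rewrite big_cons addrC /= exprSr invfM mulrA.
have sK' : (size s <= K)%N by apply: leq_trans sK; exact: leqnSn.
apply: DecD; last 2 first.
- exact: IH.
- exact: HD.
- by rewrite divr_gt0 // exprn_gt0.
- rewrite ler_pdivrMr ?exprn_gt0 // -{1}(mulr1 d); apply: ler_wpM2l; [exact: ltW | exact: exprn_ege1].
- exact: mulr_ge0.
- apply: (le_trans (N1_sum _ HB)); apply: ler_wpM2r => //; by rewrite ler_nat.
Qed.

Lemma clarke_Dec (z v : vec) : (clarke c z v < 0)%E -> exists d, 0 < d /\ Dec z v d.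
Proof.
move=> /ereal_inf_lt [s [e e0 <-] Hs].
exists e; split => // u tau Hu Ht0 Ht.
have [->|tau0] := eqVneq tau 0; first by rewrite scale0r addr0.
have tp : 0 < tau by rewrite lt_def tau0 Ht0.
apply: (ereal_quot_le tp); apply: le_lt_trans Hs.
apply: ereal_sup_ubound; exists u, tau; split => //; split => //; by rewrite tp Ht.
Qed.
End Dec.


Lemma oneD (R : realType) (f : R -> R) (t K : R) :
  0 < t -> 0 < K ->
  (forall s s', 0 <= s <= t -> 0 <= s' <= t -> `|f s - f s'| <= K * `|s - s'|) ->
  (forall s, 0 < s <= t -> f 0 < f s ->
     exists h0, 0 < h0 /\ forall h, 0 < h -> h < h0 -> h < s -> f s <= f (s - h)) ->
  f t <= f 0.
Proof.
move=> t0 K0 Hlip Hloc.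
rewrite leNgt; apply/negP => Hlt.
pose B := [set s | 0 <= s <= t /\ f t <= f s].
have Bt : B t by split; [rewrite lexx ltW | exact: lexx].
have Blb : lbound B 0 by move=> s [/andP [] ].
have Binf : has_inf B by split; [exists t | exists 0].
pose v := inf B.
have v0 : 0 <= v by apply: lb_le_inf => //; exists t.
have vt : v <= t by apply: (ge_inf (proj2 Binf)).
have fv : f t <= f v.
  rewrite leNgt; apply/negP => Hv.
  have eta0 : 0 < (f t - f v) / K by rewrite divr_gt0 // subr_gt0.
  have [s1 Bs Hs] := inf_adherent eta0 Binf.
  have [/andP [s0 st] fs] := Bs.
  have vs : v <= s1 by apply: (ge_inf (proj2 Binf)).
  have := Hlip s1 v; rewrite s0 st v0 vt => /(_ isT isT) H.
  have Hk : K * `|s1 - v| < f t - f v.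
    rewrite ger0_norm ?subr_ge0 //.
    have H1 : s1 - v < (f t - f v) / K by lra.
    by rewrite -[X in _ < X](divfK (lt0r_neq0 K0)) mulrC ltr_pM2r.
  have : f s1 - f v <= K * `|s1 - v| by apply: le_trans (ler_norm _) H.
  lra.
have vpos : 0 < v.
  rewrite lt_def v0 andbT; apply/eqP => v_0.
  by move: fv; rewrite v_0 leNgt Hlt.
have [h0 [h00 Hh]] := Hloc v ltac:(by rewrite vpos vt) (lt_le_trans Hlt fv).
pose h := Order.min h0 v / 2.
have hmin : 0 < Order.min h0 v by rewrite lt_min h00 vpos.
have h_pos : 0 < h by rewrite divr_gt0.
have hlt : h < Order.min h0 v by rewrite ltr_pdivrMr // ltr_pMr // ltr1n.
have hh0 : h < h0 by apply: (lt_le_trans hlt); rewrite ge_min lexx.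
have hv : h < v by apply: (lt_le_trans hlt); rewrite ge_min lexx orbT.
have := Hh h h_pos hh0 hv => Hfv.
have Bvh : B (v - h).
  split; last exact: le_trans Hfv.
  apply/andP; split; [rewrite subr_ge0; exact: ltW | apply: le_trans vt; rewrite lerBlDr lerDl; exact: ltW].
have := ge_inf (proj2 Binf) Bvh; rewrite -/v => H; lra.
Qed.


Section Decomp.
Variables (R : realType) (n : nat).
Notation vec := 'rV[R]_n.

Definition dir (d : vec) (r : R) (j : 'I_n) (b : bool) : vec :=
  d + (if b then r else - r) *: delta_mx 0 j.

Lemma N1_dir d r j b : 0 <= r -> N1 (dir d r j b) <= N1 d + r.
Proof.
move=> r0; apply: (le_trans (N1D _ _)); rewrite N1Z N1_delta mulr1 lerD2l.
by case: b; rewrite ?normrN ger0_norm.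
Qed.

Lemma Decomp (c : vec -> \bar R) (z d w : vec) (r dl : R) :
  0 < r -> 0 < dl -> (0 < n)%N ->
  (forall j, `|(w - d) 0 j| <= r / n%:R) ->
  (forall j b, Dec c z (dir d r j b) dl) ->
  Dec c z w (dl / (n%:R + (N1 d + r) + 1) /
     (n%:R + (size (index_enum 'I_n))%:R * (N1 d + r) + 1) ^+ size (index_enum 'I_n)).
Proof.
move=> r0 dl0 n0 Hw HD.
have nR0 : 0 < n%:R :> R by rewrite ltr0n.
set B := N1 d + r.
have B0 : 0 <= B by rewrite addr_ge0 ?N1_ge0 // ltW.
pose a (j : 'I_n) := (n%:R^-1 + (w - d) 0 j / r) / 2.
pose b (j : 'I_n) := (n%:R^-1 - (w - d) 0 j / r) / 2.
have Hvj j : - (r / n%:R) <= (w - d) 0 j <= r / n%:R by rewrite -ler_norml.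
have Hvr j : - n%:R^-1 <= (w - d) 0 j / r <= n%:R^-1.
  have := Hvj j; rewrite -ler_norml => H; rewrite -ler_norml normrM.
  rewrite (ger0_norm (_ : 0 <= r^-1)); last by rewrite invr_ge0 ltW.
  rewrite ler_pdivrMr // mulrC; by rewrite mulrC in H.
have ninv1 : n%:R^-1 <= 1 :> R by rewrite invr_le1 // ?ler1n // unitf_gt0.
have ab j : 0 <= a j <= 1 /\ 0 <= b j <= 1.
  have := Hvr j; rewrite /a /b; move: ((w - d) 0 j / r) => x /andP [h1 h2].
  have : 0 < n%:R^-1 :> R by rewrite invr_gt0.
  move: h1 h2; move: (n%:R^-1 : R) ninv1 => y y1 h1 h2 y0.
  split; apply/andP; split; lra.
pose G j := a j *: dir d r j true + b j *: dir d r j false.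
have HG j : G j = n%:R^-1 *: d + (w - d) 0 j *: delta_mx 0 j.
  apply/rowP => k; rewrite /G /dir /a /b !mxE.
  by field; rewrite !lt0r_neq0.
have sumG : \sum_(j < n) G j = w.
  under eq_bigr do rewrite HG.
  rewrite big_split /= sumr_const card_ord -scaler_nat scalerA mulfV ?lt0r_neq0 //.
  by rewrite scale1r -row_sum_delta addrC subrK.
rewrite -sumG.
apply: Dec_sum => //.
- apply: divr_gt0 => //; lra.
- move=> j; rewrite /G; apply: (le_trans (N1D _ _)); rewrite !N1Z.
  have [/andP [a0 a1] /andP [b0 b1]] := ab j.
  rewrite !ger0_norm //.
  apply: (le_trans (y := a j * B + b j * B)).
    by apply: lerD; apply: ler_wpM2l => //; apply: N1_dir; apply: ltW.
  have Hab : a j + b j = n%:R^-1.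
    by rewrite /a /b; field; rewrite !lt0r_neq0.
  rewrite -mulrDl Hab -{2}(mul1r B); exact: ler_wpM2r.
- move=> j; have [/andP [a0 a1] /andP [b0 b1]] := ab j.
  have Ha' : Dec c z (a j *: dir d r j true) dl by apply: DecZ; [rewrite a0 a1 | exact: HD].
  have Hb' : Dec c z (b j *: dir d r j false) dl by apply: DecZ; [rewrite b0 b1 | exact: HD].
  have Na : N1 (a j *: dir d r j true) <= B.
    rewrite N1Z ger0_norm //; apply: (le_trans (y := a j * B)).
      by apply: ler_wpM2l => //; apply: N1_dir; apply: ltW.
    by rewrite -[X in _ <= X]mul1r; apply: ler_wpM2r.
  exact: (DecD dl0 (lexx dl) B0 Na Ha' Hb').
Qed.
End Decomp.


Lemma c_ext_ge0 (R : realType) n m (g : 'I_m -> 'rV[R]_n -> \bar R) Gint z :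
  (0 <= c_ext g Gint z)%E.
Proof.
rewrite /c_ext; apply: sume_ge0 => l _; apply: mule_ge0; by rewrite le_max lexx.
Qed.

Lemma c_ext_Omega (R : realType) n m (g : 'I_m -> 'rV[R]_n -> \bar R) Gint z :
  Omega_ext g Gint z -> c_ext g Gint z = 0%E.
Proof.
move=> H; rewrite /c_ext big1 // => l Hl.
by rewrite max_l ?H // mule0.
Qed.

Lemma HT_dir (R : realType) n m (g : 'I_m -> 'rV[R]_n -> \bar R) Gint x d eh :
  0 < eh ->
  (forall y w t, Omega g Gint y -> eball x eh y -> eball d eh w ->
    0 < t < eh -> Omega g Gint (y + t *: w)) ->
  forall j b, hypertangent g Gint x (dir d (eh / 2) j b).
Proof.
move=> eh0 Hh j b.
set k := n%:R : R.
have k0 : 0 <= k by rewrite /k ler0n.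
set e' := eh / (2 * (k + 1)).
have He : eh = 2 * (k + 1) * e' by rewrite /e' mulrC divfK // mulf_neq0 // lt0r_neq0 //; lra.
have e'0 : 0 < e' by rewrite /e' divr_gt0 //; lra.
exists e'; split => // y w t Hy Hyx Hw /andP [t0 te].
apply: Hh => //.
- rewrite /eball in Hyx *; apply: (lt_le_trans Hyx); nra.
- rewrite /eball; apply: (le_lt_trans (enorm_le_N1 _)).
  have -> : w - d = (w - dir d (eh / 2) j b) + (dir d (eh / 2) j b - d)
    by rewrite addrA subrK.
  apply: (le_lt_trans (N1D _ _)).
  have -> : dir d (eh / 2) j b - d = (if b then eh / 2 else - (eh / 2)) *: delta_mx 0 j
    by rewrite /dir addrAC subrr add0r.
  rewrite N1Z N1_delta mulr1.
  have -> : `|if b then eh / 2 else - (eh / 2)| = eh / 2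
    by case: (b); rewrite ?normrN ger0_norm // divr_ge0 // ltW.
  have := N1_le_enorm (w - dir d (eh / 2) j b); rewrite -/k => H1.
  rewrite /eball in Hw.
  have : k * enorm (w - dir d (eh / 2) j b) <= k * e' by apply: ler_wpM2l => //; exact: ltW.
  nra.
- rewrite t0 /=; apply: (lt_le_trans te); nra.
Qed.

Unset Implicit Arguments.

Theorem mainTheorem7 (R : realType) (n m : nat)
  (g : 'I_m -> 'rV[R]_n -> \bar R) (Gint : {set 'I_m}) (x d : 'rV[R]_n) :
  Omega g Gint x -> SCQ g Gint x -> hypertangent g Gint x d ->
  exists e : R, 0 < e /\
    forall y w t, eball x e y -> eball d e w -> 0 < t < e ->
      (c_int g Gint (y + t *: w) <= c_int g Gint y)%E /\
      (c_ext g Gint (y + t *: w) <= c_ext g Gint y)%E.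
Proof.
case: n g x d => [|n] g x d.
  move=> _ _ _; exists 1; split => // y w t _ _ _.
  have -> : y + t *: w = y by rewrite [LHS]thinmx0 [RHS]thinmx0.
  by split; apply: lexx.
move=> Hx [_ [[_ [eL [L [eL0 HL]]]] [Hint Hext]]] [eh [eh0 Hh]].
set N := n.+1.
have Npos : (0 < N)%N by [].
have NR0 : 0 < N%:R :> R by rewrite ltr0n.
set r := eh / 2.
have r0 : 0 < r by rewrite divr_gt0.
have HT := HT_dir eh0 Hh.
have [dI [dI0 HDI]] : exists e, 0 < e /\
    forall p : 'I_N * bool, Dec (c_int g Gint) x (dir d r p.1 p.2) e.
  apply: fin_min.
    by move=> p a b a0 ab; apply: Dec_mono.
  move=> [j b]; apply: clarke_Dec; apply: Hint; exact: HT.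
have [EX [EX0 HEX]] : exists e, 0 < e /\ forall p : 'I_N * bool,
    forall y, eball x e y -> ~ Omega_ext g Gint y ->
      (clarke (c_ext g Gint) y (dir d r p.1 p.2) < 0)%E.
  apply: fin_min.
    move=> p a b a0 ab H y Hy; apply: H; exact: lt_le_trans ab.
  move=> [j b]; have [e [e0 He]] := Hext _ (HT j b); by exists e.
set K0 := size (index_enum 'I_N).
set B := N1 d + r.
have B0 : 0 <= B by rewrite addr_ge0 ?N1_ge0 // ltW.
pose sc (dl : R) := dl / (N%:R + B + 1) / (N%:R + K0%:R * B + 1) ^+ K0.
have sc0 dl : 0 < dl -> 0 < sc dl.
  move=> dl0; rewrite /sc divr_gt0 ?exprn_gt0 //; last by rewrite ltr_wpDl ?ltr01 // addr_ge0 // mulr_ge0.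
  by rewrite divr_gt0 //; lra.
set rho := Order.min EX eL.
have rho0 : 0 < rho by rewrite lt_min EX0 eL0.
set Dd := 2 * N%:R + N1 d + 1.
have Dd0 : 0 < Dd by have := N1_ge0 d; rewrite /Dd; lra.
set eps := Order.min (sc dI) (Order.min (r / N%:R) (Order.min 1 (rho / Dd))).
have eps0 : 0 < eps.
  by rewrite !lt_min sc0 // divr_gt0 // ltr01 divr_gt0.
have eps1 : eps <= sc dI by rewrite ge_min lexx.
have eps2 : eps <= r / N%:R by rewrite !ge_min lexx !orbT.
have eps3 : eps <= 1 by rewrite !ge_min lexx !orbT.
have eps4 : eps <= rho / Dd by rewrite !ge_min lexx !orbT.
exists eps; split => // y w t Hy Hw /andP [t0 te].
have Hwj : forall j, `|(w - d) 0 j| <= r / N%:R.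
  move=> j; apply: (le_trans (coord_le_enorm _ _)); apply: ltW; exact: lt_le_trans eps2.
split.
  have DI := Decomp (c := c_int g Gint) (z := x) r0 dI0 Npos Hwj (fun j b => HDI (j, b)).
  apply: DI; [exact: lt_le_trans eps1 | exact: ltW | exact: lt_le_trans eps1].
have rhoL : rho <= eL by rewrite /rho ge_min lexx orbT.
have rhoE : rho <= EX by rewrite /rho ge_min lexx.
have Hball : forall s, 0 <= s <= t -> eball x rho (y + s *: w).
  move=> s /andP [s0 st]; rewrite /eball.
  have E1 : N1 (y - x) <= N%:R * eps.
    apply: (le_trans (N1_le_enorm _)); apply: ler_wpM2l; [exact: ler0n | exact: ltW].
  have E2 : N1 w <= N1 d + N%:R.
    have -> : w = d + (w - d) by rewrite addrC subrK.
    apply: (le_trans (N1D _ _)); rewrite lerD2l; apply: (le_trans (N1_le_enorm _)).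
    rewrite -[X in _ <= X]mulr1; apply: ler_wpM2l; first exact: ler0n.
    apply: ltW; exact: lt_le_trans eps3.
  have E3 : s * N1 w <= eps * (N1 d + N%:R).
    apply: ler_pM => //; [exact: N1_ge0 | apply: ltW; exact: le_lt_trans te].
  have E4 : eps * Dd <= rho by rewrite -ler_pdivlMr.
  apply: (le_lt_trans (enorm_le_N1 _)); rewrite addrAC.
  apply: (le_lt_trans (N1D _ _)); rewrite N1Z ger0_norm //.
  rewrite /Dd in E4; lra.
have Hfin : forall s, 0 <= s <= t -> c_ext g Gint (y + s *: w) \is a fin_num.
  move=> s Hs; have Hb := lt_le_trans (Hball s Hs) rhoL.
  by have [H1 _] := HL _ _ Hb Hb.
pose f s := fine (c_ext g Gint (y + s *: w)).
have Hw0 : 0 <= N1 w := N1_ge0 w.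
have LN0 : 0 <= `|L| * N1 w by rewrite mulr_ge0.
have key : f t <= f 0.
  apply: (oneD (K := `|L| * N1 w + 1)) => //.
  - lra.
  - move=> s s' Hs Hs'.
    have [_ [_ H]] := HL _ _ (lt_le_trans (Hball s Hs) rhoL) (lt_le_trans (Hball s' Hs') rhoL).
    have Ed : y + s *: w - (y + s' *: w) = (s - s') *: w.
      by rewrite opprD addrACA subrr add0r scalerBl.
    rewrite Ed in H.
    have En : enorm ((s - s') *: w) <= `|s - s'| * N1 w.
      by apply: (le_trans (enorm_le_N1 _)); rewrite N1Z.
    have en0 : 0 <= enorm ((s - s') *: w) by apply: enorm_ge0.
    apply: (le_trans H).
    apply: (le_trans (y := `|L| * enorm ((s - s') *: w))).
      by apply: ler_wpM2r => //; exact: ler_norm.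
    apply: (le_trans (y := `|L| * (`|s - s'| * N1 w))).
      by apply: ler_wpM2l.
    have := normr_ge0 (s - s'); lra.
  - move=> s /andP [s0 st] Hlt.
    have Hst : 0 <= s <= t by rewrite ltW.
    have f00 : 0 <= f 0 by apply: fine_ge0; apply: c_ext_ge0.
    have Hnot : ~ Omega_ext g Gint (y + s *: w).
      move=> HO; move: Hlt; rewrite /f (c_ext_Omega HO) /=; rewrite -/(f 0); lra.
    have HbE := lt_le_trans (Hball s Hst) rhoE.
    have [ds [ds0 HDs]] : exists e, 0 < e /\ forall p : 'I_N * bool,
        Dec (c_ext g Gint) (y + s *: w) (dir d r p.1 p.2) e.
      apply: fin_min.
        by move=> p a b a0 ab; apply: Dec_mono.
      move=> p; apply: clarke_Dec; exact: HEX.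
    have DS : Dec (c_ext g Gint) (y + s *: w) w (sc ds) :=
      Decomp (c := c_ext g Gint) (z := y + s *: w) r0 ds0 Npos Hwj (fun j b => HDs (j, b)).
    have scd0 := sc0 _ ds0.
    exists (sc ds / (N1 w + 1)); split; first by rewrite divr_gt0 //; lra.
    move=> h h0 hh0 hs.
    have hh1 : h * (N1 w + 1) < sc ds by rewrite -ltr_pdivlMr //; lra.
    have hN : 0 <= h * N1 w by rewrite mulr_ge0 // ltW.
    have hlt : h < sc ds by lra.
    have Hu : enorm (y + (s - h) *: w - (y + s *: w)) < sc ds.
      have -> : y + (s - h) *: w - (y + s *: w) = (- h) *: w.
        by rewrite opprD addrACA subrr add0r -scalerBl; congr (_ *: _); lra.
      apply: (le_lt_trans (enorm_le_N1 _)); rewrite N1Z normrN ger0_norm ?ltW //.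
      lra.
    have := DS _ _ Hu (ltW h0) hlt.
    rewrite -addrA -scalerDl subrK => Hle.
    have Hsh : 0 <= s - h <= t by apply/andP; split; lra.
    exact: (fine_le (Hfin _ Hst) (Hfin _ Hsh) Hle).
have Hft : c_ext g Gint (y + t *: w) \is a fin_num by apply: Hfin; rewrite ltW // lexx.
have Hf0 : c_ext g Gint (y + 0 *: w) \is a fin_num by apply: Hfin; rewrite lexx ltW.
rewrite scale0r addr0 in Hf0.
rewrite /f scale0r addr0 in key.
by rewrite -(fineK Hft) -(fineK Hf0) lee_fin.
Qed.
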